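(* For $\mathcal O\subseteq\mathbb F$, the family $\mathrm{UP}(\mathcal O)\setminus\mathrm{EX}(\mathcal O)$ is the set of the cores of the minimal elements of $\mathcal O$.
   Context: Fix a type $\sigma$; $\sigma$-structures are finite sets with an $r$-ary relation for each relation symbol of arity $r$, homomorphisms are relation-preserving maps, $\mathbf A\to\mathbf B$ means one exists. $\mathbb F$ is the set of isomorphism classes of $\sigma$-forests (structures whose incidence multigraph — bipartite with parts the vertices and the blocks $(R,(x_1,\dots,x_r))$, $(x_1,\dots,x_r)\in R(\mathbf A)$, an edge from $x_i$ to the block for each $i$ — has no cycles or parallel edges). The core of $\mathbf A$ is a homomorphically equivalent structure with the minimum number of vertices (unique up to isomorphism). $\mathbf A$ is minimal in $\mathcal O$ if $\mathbf A\in\mathcal O$ and for all $\mathbf C\in\mathcal O$ with $\mathbf C\to\mathbf A$ we have $\mathbf A\to\mathbf C$. A homomorphism $h:\mathbf A\to\mathbf B$ is a retraction if there is a homomorphism $g:\mathbf B\to\mathbf A$ with $h\circ g=\mathrm{id}_{\mathbf B}$, otherwise a non-retraction. $\mathrm{UP}(\mathcal O)=\{\mathbf A\in\mathbb F:\exists\mathbf T\in\mathcal O,\ \mathbf T\to\mathbf A\}$ and $\mathrm{EX}(\mathcal O)=\{\mathbf A\in\mathbb F:\exists\mathbf T\in\mathcal O$ and a non-retraction $h:\mathbf T\to\mathbf A\}$. *)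

(* Defs.v *)
From mathcomp Require Import all_boot.
Set Implicit Arguments. Unset Strict Implicit. Unset Printing Implicit Defensive.

Section SigmaStructures.
Variables (sig : finType) (ar : sig -> nat).

Record structure := mkStr {
  carrier : finType;
  rel_of : forall s : sig, {set (ar s).-tuple carrier}
}.

Definition is_hom (A B : structure) (f : carrier A -> carrier B) : Prop :=
  forall (s : sig) (t : (ar s).-tuple (carrier A)),
    t \in rel_of A s -> map_tuple f t \in rel_of B s.

Definition hom (A B : structure) : Prop := exists f, @is_hom A B f.

Definition hom_equiv (A B : structure) : Prop := hom A B /\ hom B A.

Definition is_core_of (C A : structure) : Prop :=
  hom_equiv C A /\
  forall B : structure, hom_equiv B A -> #|carrier C| <= #|carrier B|.

(* Nodes of the incidence multigraph: vertices and (potential) blocks. *)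
Definition inode (A : structure) : finType :=
  (carrier A + {s : sig & (ar s).-tuple (carrier A)})%type.

Definition iadj (A : structure) : rel (inode A) := fun u v =>
  match u, v with
  | inl x, inr b => (tagged b \in rel_of A (tag b)) && (x \in val (tagged b))
  | inr b, inl x => (tagged b \in rel_of A (tag b)) && (x \in val (tagged b))
  | _, _ => false
  end.

(* Forest: no parallel edges (each tuple has pairwise distinct entries) and
   no cycle in the incidence graph. *)
Definition is_forest (A : structure) : Prop :=
  (forall (s : sig) (t : (ar s).-tuple (carrier A)),
      t \in rel_of A s -> uniq (val t)) /\
  ~ (exists p : seq (inode A), [/\ 3 <= size p, uniq p & cycle (@iadj A) p]).

Definition retraction (A B : structure) (h : carrier A -> carrier B) : Prop :=
  exists g : carrier B -> carrier A, @is_hom B A g /\ forall y, h (g y) = y.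

Definition UP (O : structure -> Prop) (A : structure) : Prop :=
  is_forest A /\ exists T, O T /\ hom T A.

Definition EX (O : structure -> Prop) (A : structure) : Prop :=
  is_forest A /\
  exists T (h : carrier T -> carrier A),
    [/\ O T, @is_hom T A h & ~ retraction h].

Definition minimal_in (O : structure -> Prop) (A : structure) : Prop :=
  O A /\ forall C, O C -> hom C A -> hom A C.

End SigmaStructures.

(* Main.v *)
Require Import Defs.
From mathcomp Require Import all_boot.
From mathcomp Require Import fingroup perm.
From Stdlib Require Import Classical.
Set Implicit Arguments. Unset Strict Implicit.

Section Aux.
Variables (sig : finType) (ar : sig -> nat).

Lemma hom_comp (A B C : structure ar) (f : carrier A -> carrier B)
  (g : carrier B -> carrier C) :
  is_hom f -> is_hom g -> is_hom (g \o f).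
Proof.
move=> hf hg s t tA.
have -> : map_tuple (g \o f) t = map_tuple g (map_tuple f t).
  by apply: val_inj; rewrite /= map_comp.
by apply: hg; apply: hf.
Qed.

Lemma hom_trans (A B C : structure ar) : hom A B -> hom B C -> hom A C.
Proof. by move=> [f hf] [g hg]; exists (g \o f); apply: hom_comp. Qed.

Lemma hom_iter (A : structure ar) (e : carrier A -> carrier A) n :
  is_hom e -> is_hom (iter n e).
Proof.
move=> he; elim: n => [|n IH] s t tA /=.
  have -> : map_tuple (iter 0 e) t = t by apply: val_inj; rewrite /= map_id.
  done.
have -> : map_tuple (fun x => e (iter n e x)) t = map_tuple e (map_tuple (iter n e) t).
  by apply: val_inj; rewrite /= -map_comp.
by apply: he; apply: IH.
Qed.

Definition img_str (A : structure ar) (e : carrier A -> carrier A) : structure ar :=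
  @mkStr sig ar {x : carrier A | x \in codom e}
    (fun s => [set t : (ar s).-tuple _ | map_tuple val t \in rel_of A s]).

Lemma core_endo_inj (A M : structure ar) (e : carrier A -> carrier A) :
  is_core_of A M -> is_hom e -> injective e.
Proof.
move=> [[hAM hMA] Hmin] he.
pose B := img_str e.
have hBA : @is_hom _ _ B A val.
  by move=> s t; rewrite inE.
have hAB : @is_hom _ _ A B (fun x => exist _ (e x) (codom_f e x)).
  move=> s t tA; rewrite inE.
  have -> : map_tuple val (map_tuple (fun x => exist (fun y => y \in codom e) (e x) (codom_f e x)) t)
     = map_tuple e t by apply: val_inj; rewrite /= -map_comp.
  by apply: he.
have eqB : hom_equiv B M.
  split; [apply: hom_trans hAM; by exists val | apply: (hom_trans hMA); by eexists; exact: hAB].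
have := Hmin B eqB; rewrite /B /img_str /= card_sig => Hle.
have Hc : #|codom e| == #|carrier A|.
  rewrite eqn_leq; apply/andP; split; last first.
    by apply: leq_trans Hle _; apply: subset_leq_card; apply/subsetP => x; rewrite !inE.
  exact: leq_image_card.
move=> x y; move/image_injP: Hc => Hi; exact: Hi.
Qed.

Definition imap (A M : structure ar) (f : carrier A -> carrier M) (u : inode A) : inode M :=
  match u with
  | inl x => inl (f x)
  | inr b => inr (Tagged (fun s => (ar s).-tuple (carrier M)) (map_tuple f (tagged b)))
  end.

Lemma imap_inj (A M : structure ar) (f : carrier A -> carrier M) :
  injective f -> injective (imap f).
Proof.
move=> fi [x|[s t]] [y|[s' t']] //=.
- by case=> /fi ->.
- move=> H.
  have es : s = s' by move: H => /(congr1 (fun u : inode M => if u is inr b then tag b else s)).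
  have em : map f t = map f t'.
    by move: H => /(congr1 (fun u : inode M => if u is inr b then val (tagged b) else [::])).
  subst s'; have ett := inj_map fi em.
  by congr inr; congr existT; apply: val_inj.
Qed.

Lemma forest_inj (A M : structure ar) (f : carrier A -> carrier M) :
  is_forest M -> is_hom f -> injective f -> is_forest A.
Proof.
move=> [Mu Mc] hf fi; split.
  move=> s t tA; have := Mu _ _ (hf _ _ tA); rewrite /= => /map_uniq; done.
move=> [p [sz up cp]]; apply: Mc; exists (map (imap f) p); split.
- by rewrite size_map.
- by rewrite (map_inj_uniq (imap_inj fi)).
- rewrite cycle_map; apply: sub_cycle cp => u v.
  case: u => [x|[s t]]; case: v => [y|[s' t']] //= /andP [h1 h2];
    apply/andP; split; rewrite ?hf //= ?map_f //.
Qed.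

Lemma surj_card (A B : finType) (p : B -> A) : (forall y, exists x, p x = y) -> #|A| <= #|B|.
Proof.
move=> ps; apply: leq_trans (leq_image_card p B).
apply: subset_leq_card; apply/subsetP => y _.
by have [x <-] := ps y; apply: image_f.
Qed.

End Aux.

Theorem proposition6p2 (sig : finType) (ar : sig -> nat)
    (O : structure ar -> Prop) :
  (forall T, O T -> is_forest T) ->
  forall A : structure ar,
    (UP O A /\ ~ EX O A) <-> (exists M, minimal_in O M /\ is_core_of A M).
Proof.
move=> OF A; split.
- move=> [[Af [T [OT [h hh]]]] nEX].
  have retr : forall T' (h' : carrier T' -> carrier A), O T' -> is_hom h' -> retraction h'.
    move=> T' h' OT' hh'; apply: NNPP => nr; apply: nEX; split => //.
    by exists T', h'; split.
  have [g [hg hgK]] := retr _ _ OT hh.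
  exists T; split.
    split => // C OC [c hc].
    have [g' [hg' _]] := retr _ _ OC (hom_comp hc hh).
    by exists (g' \o h); apply: hom_comp.
  split; first by split; [exists g | exists h].
  move=> B [[b hb] [b' hb']].
  pose p := (h \o b) \o (b' \o g).
  have hp : is_hom p by apply: hom_comp; apply: hom_comp.
  have [q [hq qK]] := retr _ _ OT (hom_comp hh hp).
  apply: (@surj_card _ _ (h \o b)) => y.
  by exists (b' (g (h (q y)))); rewrite -[RHS]qK.
- move=> [M [[OM Mmin] Hc]].
  have [[[f hf] [k hk]] _] := Hc.
  have ekf := core_endo_inj Hc (hom_comp hf hk).
  have fi : injective f by move=> x y /(congr1 k) /ekf.
  have Af : is_forest A := forest_inj (OF _ OM) hf fi.
  split; first by split => //; exists M; split => //; exists k.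
  move=> [_ [T [h [OT hh nr]]]]; apply: nr.
  have [m hm] := Mmin T OT (hom_trans (ex_intro _ h hh) (ex_intro _ f hf)).
  pose k' := m \o f.
  have hk' : is_hom k' by apply: hom_comp.
  have hsig : is_hom (h \o k') by apply: hom_comp.
  have sinj := core_endo_inj Hc hsig.
  pose P := perm sinj.
  pose n := #[P]%g.-1.
  exists (k' \o iter n (h \o k')); split.
    by apply: hom_comp => //; apply: hom_iter.
  move=> y /=.
  have -> : h (k' (iter n (h \o k') y)) = iter n.+1 (h \o k') y by [].
  have e1 : forall j z, iter j (h \o k') z = (P ^+ j)%g z.
    by move=> j z; rewrite permX; elim: j => //= j ->; rewrite permE.
  rewrite e1 /n prednK ?order_gt0 // expg_order perm1 //.
Qed.
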